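(* Fix finite nonempty $A$, $\Omega$, a full-support prior $\mu_0$ on $\Omega$, and a finite $M$ with $|M|>\max\{|\Omega|,|A|\}$. There is a set of transparent environments of Lebesgue measure one in $[0,1]^{|A|(|\Omega|+1)}$ such that, for every environment in it, if cheap-talk Sender values randomization then commitment is valuable.
   Context: An environment $(u_S,u_R)$ with $u_S,u_R:A\times\Omega\to[0,1]$ is transparent if there is $v:A\to[0,1]$ with $u_S(a,\omega)=v(a)$ for all $a,\omega$; the set of transparent environments is identified with $[0,1]^{|A|(|\Omega|+1)}$ (coordinates $v$ and $u_R$). Messaging strategies $\sigma:\Omega\to\Delta M$, action strategies $\rho:M\to\Delta A$, $U_i(\sigma,\rho)=\sum_{\omega,m,a}\mu_0(\omega)\sigma(m|\omega)\rho(a|m)u_i(a,\omega)$. $(\sigma,\rho)$ is S-BR if $\sigma\in\arg\max_{\sigma'}U_S(\sigma',\rho)$ and R-BR if $\rho\in\arg\max_{\rho'}U_R(\sigma,\rho')$; a cheap-talk equilibrium is both. Persuasion payoff: max of $U_S$ over R-BR profiles; cheap-talk payoff: max over cheap-talk equilibria. Commitment is valuable if persuasion payoff > cheap-talk payoff. $\sigma$ is partitional if for every $\omega$ some $m$ has $\sigma(m|\omega)=1$. Partitional cheap-talk payoff: max of $U_S$ over cheap-talk equilibria with partitional $\sigma$. Cheap-talk Sender values randomization if cheap-talk payoff > partitional cheap-talk payoff. *)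

(* Defs.v *)
From mathcomp Require Import all_boot all_order all_algebra.
From mathcomp Require Import boolp classical_sets reals.
Set Implicit Arguments. Unset Strict Implicit. Unset Printing Implicit Defensive.
Import Order.TTheory GRing.Theory Num.Theory.
Local Open Scope ring_scope.
Local Open Scope classical_set_scope.

Section Game.
Variables (R : realType) (A Omega M : finType).

Definition is_distr (T : finType) (p : T -> R) : Prop :=
  (forall t, 0 <= p t) /\ \sum_(t : T) p t = 1.

Definition full_support_prior (mu0 : Omega -> R) : Prop :=
  is_distr mu0 /\ forall w, 0 < mu0 w.

Definition msg_strategy (sigma : Omega -> M -> R) : Prop :=
  forall w, is_distr (sigma w).

Definition act_strategy (rho : M -> A -> R) : Prop :=
  forall m, is_distr (rho m).

Definition payoff (mu0 : Omega -> R) (u : A -> Omega -> R)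
    (sigma : Omega -> M -> R) (rho : M -> A -> R) : R :=
  \sum_(w : Omega) \sum_(m : M) \sum_(a : A)
     mu0 w * sigma w m * rho m a * u a w.

Definition S_BR mu0 (uS : A -> Omega -> R) sigma rho : Prop :=
  forall sigma', msg_strategy sigma' ->
    payoff mu0 uS sigma' rho <= payoff mu0 uS sigma rho.

Definition R_BR mu0 (uR : A -> Omega -> R) sigma rho : Prop :=
  forall rho', act_strategy rho' ->
    payoff mu0 uR sigma rho' <= payoff mu0 uR sigma rho.

Definition cheap_talk_eq mu0 uS uR sigma rho : Prop :=
  msg_strategy sigma /\ act_strategy rho /\
  S_BR mu0 uS sigma rho /\ R_BR mu0 uR sigma rho.

Definition partitional (sigma : Omega -> M -> R) : Prop :=
  forall w, exists m, sigma w m = 1.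

(* persuasion payoff: max of U_S over R-BR profiles (the max is attained,
   so it equals the supremum) *)
Definition persuasion_payoff mu0 uS uR : R :=
  sup [set x | exists sigma rho, [/\ msg_strategy sigma, act_strategy rho,
         R_BR mu0 uR sigma rho & x = payoff mu0 uS sigma rho]].

Definition cheap_talk_payoff mu0 uS uR : R :=
  sup [set x | exists sigma rho, cheap_talk_eq mu0 uS uR sigma rho /\
         x = payoff mu0 uS sigma rho].

Definition partitional_cheap_talk_payoff mu0 uS uR : R :=
  sup [set x | exists sigma rho, [/\ cheap_talk_eq mu0 uS uR sigma rho,
         partitional sigma & x = payoff mu0 uS sigma rho]].

Definition commitment_valuable mu0 uS uR : Prop :=
  cheap_talk_payoff mu0 uS uR < persuasion_payoff mu0 uS uR.

Definition values_randomization mu0 uS uR : Prop :=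
  partitional_cheap_talk_payoff mu0 uS uR < cheap_talk_payoff mu0 uS uR.

(* Transparent environments, identified with points of R^(A x (Omega+1)):
   coordinate (a, None) is v a, coordinate (a, Some w) is u_R a w. *)
Definition env_index := (A * option Omega)%type.

Definition env_uS (x : env_index -> R) : A -> Omega -> R :=
  fun a _ => x (a, None).
Definition env_uR (x : env_index -> R) : A -> Omega -> R :=
  fun a w => x (a, Some w).

End Game.

(* Lebesgue measure on R^I (I finite): a set is Lebesgue-null iff for every
   eps > 0 it is covered by countably many closed boxes of total volume
   at most eps (Lebesgue outer measure zero). *)
Definition box_volume (R : realType) (I : finType) (lo hi : I -> R) : R :=
  \prod_(i : I) (hi i - lo i).

Definition lebesgue_null (R : realType) (I : finType) (N : set (I -> R)) : Prop :=
  forall eps : R, 0 < eps ->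
    exists lo hi : nat -> I -> R,
      (forall k i, lo k i <= hi k i) /\
      (forall x, N x -> exists k, forall i, lo k i <= x i <= hi k i) /\
      (forall n, \sum_(k < n) box_volume (lo k) (hi k) <= eps).

Definition unit_cube (R : realType) (I : finType) : set (I -> R) :=
  [set x | forall i, 0 <= x i <= 1].

Definition full_measure_in_cube (R : realType) (I : finType) (E : set (I -> R)) : Prop :=
  E `<=` @unit_cube R I /\ lebesgue_null (@unit_cube R I `\` E).

(* Main.v *)
Require Import Defs.
From mathcomp Require Import all_boot all_order all_algebra.
From mathcomp Require Import boolp classical_sets reals.
From mathcomp Require Import ring lra zify.
Import Order.TTheory GRing.Theory Num.Theory.
Local Open Scope ring_scope.
Local Open Scope classical_set_scope.

Section Game.
Variables (R : realType) (A Omega M : finType).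
Variable mu0 : Omega -> R.
Hypothesis hmu0 : full_support_prior mu0.
Implicit Types (s : Omega -> M -> R) (f : M -> R) (k : R) (r : M -> A -> R) (u uR : A -> Omega -> R) (v : A -> R).

Lemma sum_ge0_eq0 (I : finType) (F : I -> R) :
  (forall i, 0 <= F i) -> \sum_i F i <= 0 -> forall i, F i = 0.
Proof.
move=> F0 Fle i; apply: (@psumr_eq0P _ _ predT F) => //.
by apply/le_anti; rewrite Fle /= sumr_ge0.
Qed.
Arguments sum_ge0_eq0 {I F}.

Lemma sum_delta (T : finType) (b : T) (F : T -> R) :
  \sum_a (a == b)%:R * F a = F b.
Proof.
rewrite (bigD1 b) //= eqxx mul1r big1 ?addr0 // => a /negbTE ->.
by rewrite mul0r.
Qed.

Lemma sum_delta1 (T : finType) (b : T) : \sum_(a : T) (a == b)%:R = 1 :> R.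
Proof.
by rewrite (bigD1 b) //= eqxx big1 ?addr0 // => a /negbTE ->.
Qed.

Definition pureA (f : M -> A) : M -> A -> R := fun m a => (a == f m)%:R.
Definition pureM (m0 : M) : Omega -> M -> R := fun _ m => (m == m0)%:R.
Definition W (u : A -> Omega -> R) (s : Omega -> M -> R) m a :=
  \sum_w mu0 w * s w m * u a w.
Definition Vv (v : A -> R) (r : M -> A -> R) m := \sum_a r m a * v a.
Definition PV (s : Omega -> M -> R) (f : M -> R) :=
  \sum_w mu0 w * \sum_m s w m * f m.

Lemma payoffW u s r : payoff mu0 u s r = \sum_m \sum_a r m a * W u s m a.
Proof.
rewrite /payoff exchange_big; apply eq_bigr => m _ /=.
rewrite /W exchange_big /=; apply eq_bigr => a _; rewrite mulr_sumr.
by apply eq_bigr => w _; ring.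
Qed.

Lemma payoffV v s r : payoff mu0 (fun a _ => v a) s r = PV s (Vv v r).
Proof.
apply eq_bigr => w _; rewrite mulr_sumr; apply eq_bigr => m _.
rewrite /Vv !mulr_sumr; apply eq_bigr => a _; ring.
Qed.

Lemma PV_sub s f k : msg_strategy s ->
  PV s f - k = \sum_w mu0 w * \sum_m s w m * (f m - k).
Proof.
move=> hs; have [[mu_ge0 mu1] _] := hmu0.
have E w : \sum_m s w m * (f m - k) = \sum_m s w m * f m - k.
  have [_ s1] := hs w.
  rewrite (eq_bigr (fun m => s w m * f m - s w m * k)); last by move=> *; rewrite mulrBr.
  by rewrite sumrB -mulr_suml s1 mul1r.
rewrite (eq_bigr (fun w => mu0 w * \sum_m s w m * f m - mu0 w * k)); last first.
  by move=> w _; rewrite E mulrBr.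
by rewrite sumrB -mulr_suml mu1 mul1r.
Qed.

Lemma PV_nonneg s f k : msg_strategy s ->
  (forall w m, 0 < s w m -> k <= f m) ->
  forall w m, 0 <= s w m * (f m - k).
Proof.
move=> hs hf w m; have [s0 _] := hs w.
have := s0 m; rewrite le_eqVlt => /orP[/eqP <-|hp]; first by rewrite mul0r.
by apply: mulr_ge0; [apply: ltW|rewrite subr_ge0; apply: hf hp].
Qed.

Lemma PV_ge s f k : msg_strategy s ->
  (forall w m, 0 < s w m -> k <= f m) -> k <= PV s f.
Proof.
move=> hs hf; have [[mu_ge0 _] _] := hmu0.
rewrite -subr_ge0 PV_sub //; apply: sumr_ge0 => w _; apply: mulr_ge0 => //.
by apply: sumr_ge0 => m _; apply: PV_nonneg.
Qed.

Lemma PV_eq_ge s f k : msg_strategy s ->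
  (forall w m, 0 < s w m -> k <= f m) -> PV s f <= k ->
  forall w m, 0 < s w m -> f m = k.
Proof.
move=> hs hf hle w m hp; have [[mu_ge0 _] mupos] := hmu0.
have H0 := @PV_nonneg s f k hs hf.
have H1 : \sum_w mu0 w * \sum_m s w m * (f m - k) <= 0 by rewrite -PV_sub // subr_le0.
have H2 := sum_ge0_eq0 (fun w => mulr_ge0 (mu_ge0 w) (sumr_ge0 _ (fun m _ => H0 w m))) H1 w.
move: H2 => /eqP; rewrite mulf_eq0 (gt_eqF (mupos w)) /= => /eqP H2.
have H3 := sum_ge0_eq0 (H0 w) (ltac:(by rewrite H2))  m.
 move: H3 => /eqP; rewrite mulf_eq0 (gt_eqF hp) /= subr_eq0 => /eqP //.
Qed.

Lemma PV_opp s f : PV s (fun m => - f m) = - PV s f.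
Proof.
rewrite /PV -sumrN; apply eq_bigr => w _; rewrite -mulrN -sumrN.
by congr (_ * _); apply eq_bigr => m _; rewrite mulrN.
Qed.

Lemma PV_le s f k : msg_strategy s ->
  (forall w m, 0 < s w m -> f m <= k) -> PV s f <= k.
Proof.
move=> hs hf; rewrite -lerN2 -PV_opp; apply: PV_ge => // w m hp.
by rewrite lerN2; apply: hf hp.
Qed.

Lemma PV_eq_le s f k : msg_strategy s ->
  (forall w m, 0 < s w m -> f m <= k) -> k <= PV s f ->
  forall w m, 0 < s w m -> f m = k.
Proof.
move=> hs hf hle w m hp; apply: oppr_inj.
apply: (@PV_eq_ge s (fun m => - f m) (- k) hs) hp.
  by move=> w' m' hp'; rewrite lerN2; apply: hf hp'.
by rewrite PV_opp lerN2.
Qed.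

Lemma PV_const s k : msg_strategy s -> PV s (fun _ => k) = k.
Proof.
by move=> hs; apply/le_anti; rewrite PV_le ?PV_ge.
Qed.

Lemma PV_pureM m0 f : PV (pureM m0) f = f m0.
Proof.
have [[_ mu1] _] := hmu0.
rewrite /PV (eq_bigr (fun w => mu0 w * f m0)); first by rewrite -mulr_suml mu1 mul1r.
by move=> w _; rewrite /pureM sum_delta.
Qed.

Lemma msg_pureM m0 : msg_strategy (pureM m0).
Proof. by move=> w; split=> [m|]; rewrite /pureM ?sum_delta1. Qed.

Lemma act_pureA (g : M -> A) : act_strategy (pureA g).
Proof. by move=> m; split=> [a|]; rewrite /pureA ?sum_delta1. Qed.

Lemma Vv_pure v (g : M -> A) m : Vv v (pureA g) m = v (g m).
Proof. by rewrite /Vv /pureA sum_delta. Qed.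

Lemma W_pureM u m0 m a :
  W u (pureM m0) m a = (m == m0)%:R * \sum_w mu0 w * u a w.
Proof. by rewrite /W mulr_sumr; apply eq_bigr => w _; rewrite /pureM; ring. Qed.

Lemma RBR_pure uR s (f : M -> A) : (forall m b, W uR s m b <= W uR s m (f m)) ->
  R_BR mu0 uR s (pureA f).
Proof.
move=> hf r' hr'; rewrite !payoffW; apply: ler_sum => m _.
rewrite /pureA sum_delta.
have [r0 r1] := hr' m.
apply: (le_trans (y := \sum_a r' m a * W uR s m (f m))).
  by apply: ler_sum => a _; apply: ler_wpM2l.
by rewrite -mulr_suml r1 mul1r.
Qed.

Lemma RBR_support uR s r : act_strategy r -> R_BR mu0 uR s r ->
  forall m a, 0 < r m a -> forall b, W uR s m b <= W uR s m a.
Proof.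
move=> hr hbr m a ra b.
pose best := fun m' => [arg max_(b' > a) W uR s m' b']%O.
have hbest m' b' : W uR s m' b' <= W uR s m' (best m').
  by rewrite /best; case: arg_maxP => // i _ hi; apply: hi.
have H := hbr (pureA best) (act_pureA best).
rewrite !payoffW in H.
have D m' : \sum_a r m' a * W uR s m' a <= W uR s m' (best m').
  have [r0 r1] := hr m'.
  apply: (le_trans (y := \sum_a r m' a * W uR s m' (best m'))).
    by apply: ler_sum => a' _; apply: ler_wpM2l.
  by rewrite -mulr_suml r1 mul1r.
have H2 : \sum_m' (W uR s m' (best m') - \sum_a r m' a * W uR s m' a) <= 0.
  rewrite sumrB subr_le0; apply: le_trans H; apply: ler_sum => m' _.
  by rewrite /pureA sum_delta.
have G3 : forall m', 0 <= W uR s m' (best m') - \sum_a r m' a * W uR s m' a.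
  by move=> m'; rewrite subr_ge0.
have H3 := sum_ge0_eq0 G3 H2 m.
have [r0 r1] := hr m.
have E : \sum_a' r m a' * (W uR s m (best m) - W uR s m a') <= 0.
  rewrite (eq_bigr (fun a' => r m a' * W uR s m (best m) - r m a' * W uR s m a'));
    last by move=> *; rewrite mulrBr.
  by rewrite sumrB -mulr_suml r1 mul1r H3.
have G4 : forall a', 0 <= r m a' * (W uR s m (best m) - W uR s m a').
  by move=> a'; rewrite mulr_ge0 // subr_ge0.
have H4 := sum_ge0_eq0 G4 E a.
move: H4 => /eqP; rewrite mulf_eq0 (gt_eqF ra) /= subr_eq0 => /eqP <-.
exact: hbest.
Qed.

Definition uSv v : A -> Omega -> R := fun a _ => v a.

Lemma payoffV' v s r : payoff mu0 (uSv v) s r = PV s (Vv v r).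
Proof. exact: payoffV. Qed.

Lemma payoff_le1 v s r : msg_strategy s -> act_strategy r -> (forall a, v a <= 1) ->
  payoff mu0 (uSv v) s r <= 1.
Proof.
move=> hs hr v1; rewrite payoffV'; apply: PV_le => // w m _.
rewrite /Vv; have [r0 r1] := hr m.
apply: (le_trans (y := \sum_a r m a * 1)); last by rewrite -mulr_suml r1 mul1r.
by apply: ler_sum => a _; apply: ler_wpM2l.
Qed.

Lemma Vv_const v a : Vv v (pureA (fun _ => a)) = fun _ => v a.
Proof. by apply: funext => m; rewrite Vv_pure. Qed.

Lemma babble v uR m0 a :
  (forall b, \sum_w mu0 w * uR b w <= \sum_w mu0 w * uR a w) ->
  [/\ cheap_talk_eq mu0 (uSv v) uR (pureM m0) (pureA (fun _ => a)),
      partitional (pureM m0) &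
      payoff mu0 (uSv v) (pureM m0) (pureA (fun _ => a)) = v a].
Proof.
move=> ha.
have Pc s : msg_strategy s -> payoff mu0 (uSv v) s (pureA (fun _ => a)) = v a.
  by move=> hs; rewrite payoffV' Vv_const PV_const.
split; last by rewrite Pc //; exact: msg_pureM.
- split; first exact: msg_pureM.
  split; first exact: act_pureA.
  split.
    by move=> s' hs'; rewrite !Pc //; exact: msg_pureM.
  apply: RBR_pure => m b; rewrite !W_pureM; apply: ler_wpM2l => //.
- by move=> w; exists m0; rewrite /pureM eqxx.
Qed.

Lemma main v uR (a0 : A) (m0 : M) (w0 : Omega) : injective v -> (forall a, v a <= 1) ->
  values_randomization M mu0 (uSv v) uR -> commitment_valuable M mu0 (uSv v) uR.
Proof.
move=> vinj v1 hvr; rewrite /commitment_valuable ltNge; apply/negP => hle.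
set c := cheap_talk_payoff M mu0 (uSv v) uR.
pose aopt := [arg max_(b > a0) \sum_w mu0 w * uR b w]%O.
have haopt b : \sum_w mu0 w * uR b w <= \sum_w mu0 w * uR aopt w.
  by rewrite /aopt; case: arg_maxP => // i _ hi; apply: hi.
have [Bq Bp Bpay] := @babble v uR m0 _ haopt.
pose CT := [set x | exists (sigma : Omega -> M -> R) rho, cheap_talk_eq mu0 (uSv v) uR sigma rho /\
         x = payoff mu0 (uSv v) sigma rho].
have hc : c = sup CT by [].
have hasCT : has_sup CT.
  split; first by exists (payoff mu0 (uSv v) (pureM m0) (pureA (fun _ => aopt)));
    exists (pureM m0), (pureA (fun _ => aopt)).
  by exists 1 => x [s [r [[hs [hr _]] ->]]]; apply: payoff_le1.
pose t := \big[Num.max/(c - 1)]_(a | v a < c) v a.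
have ht : t < c.
  rewrite /t; apply: (big_ind (fun y => y < c)) => //.
    by rewrite ltrBlDr ltrDl ltr01.
  by move=> y z hy hz; rewrite gt_max hy hz.
have htv a : v a < c -> v a <= t.
  by move=> h; rewrite /t (bigD1 a) //= le_max lexx.
have hpos : 0 < c - t by rewrite subr_gt0.
have [e [s [r [[hs [hr [hsbr hrbr]]] ->]]] he] := sup_adherent hpos hasCT.
rewrite -hc opprB addrCA subrr addr0 in he.
pose O m b := [forall b', W uR s m b' <= W uR s m b].
pose bW m := [arg max_(b > a0) W uR s m b]%O.
have hbW m : O m (bW m).
  by rewrite /bW; case: arg_maxP => // i _ hi; apply/forallP => b; apply: hi.
pose best m := [arg max_(b > bW m | O m b) v b]%O.
have hbest m : O m (best m) /\ forall b, O m b -> v b <= v (best m).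
  by rewrite /best; case: arg_maxP => [|i hi hmax]; [exact: hbW| split => // b hb; exact: hmax].
have hsupp m a : 0 < r m a -> O m a.
  by move=> h; apply/forallP => b; exact: (@RBR_support uR s r hr hrbr m a h b).
have hVb m : Vv v r m <= v (best m).
  rewrite /Vv; have [r0 r1] := hr m.
  apply: (le_trans (y := \sum_a r m a * v (best m))); last by rewrite -mulr_suml r1 mul1r.
  apply: ler_sum => a _; have := r0 a; rewrite le_eqVlt => /orP[/eqP <-|hp]; first by rewrite !mul0r.
  by apply: ler_wpM2l => //; apply: (proj2 (hbest m)); apply: hsupp.
have hdev m : Vv v r m <= payoff mu0 (uSv v) s r.
  by have := hsbr (pureM m) (msg_pureM m); rewrite payoffV' PV_pureM.
have hused w m : 0 < s w m -> Vv v r m = payoff mu0 (uSv v) s r.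
  move=> hp; apply: (@PV_eq_le s (Vv v r) _ hs (fun w' m' _ => hdev m') _ w m hp).
  by rewrite payoffV'.
have hge w m : 0 < s w m -> c <= v (best m).
  move=> hp; rewrite leNgt; apply/negP => hlt.
  have h1 := htv _ hlt; have h2 := hVb m; rewrite (hused w m hp) in h2.
  by have := lt_le_trans he (le_trans h2 h1); rewrite ltxx.
have hRBR : R_BR mu0 uR s (pureA best).
  by apply: RBR_pure => m b; have /forallP := proj1 (hbest m); apply.
have hy : payoff mu0 (uSv v) s (pureA best) <= c.
  apply: le_trans hle; apply: sup_upper_bound.
    split; first by exists (payoff mu0 (uSv v) s (pureA best)); exists s, (pureA best); split => //; exact: act_pureA.
    by exists 1 => x [s' [r' [hs' hr' _ ->]]]; apply: payoff_le1.
  by exists s, (pureA best); split => //; exact: act_pureA.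
rewrite payoffV' (_ : Vv v (pureA best) = fun m => v (best m)) in hy; last first.
  by apply: funext => m; rewrite Vv_pure.
have heq w m : 0 < s w m -> v (best m) = c := @PV_eq_ge s (fun m => v (best m)) c hs hge hy w m.
have [m1 hm1] : exists m, 0 < s w0 m.
  case: (pselect (exists m, 0 < s w0 m)) => // hn; exfalso.
  have [s0 s1] := hs w0.
  have : \sum_m s w0 m = 0.
    apply: big1 => m _; apply/eqP; rewrite eq_le (s0 m) andbT leNgt; apply/negP => h.
    by apply: hn; exists m.
  by rewrite s1 => /eqP; rewrite oner_eq0.
set astar := best m1.
have hA w m : 0 < s w m -> best m = astar.
  by move=> hp; apply: vinj; rewrite (heq _ _ hp) (heq _ _ hm1).
have hopt b : \sum_w mu0 w * uR b w <= \sum_w mu0 w * uR astar w.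
  have Wsum b' : \sum_m W uR s m b' = \sum_w mu0 w * uR b' w.
    rewrite /W exchange_big; apply: eq_bigr => w _; have [_ s1] := hs w.
    rewrite (eq_bigr (fun m => (mu0 w * uR b' w) * s w m)); last by move=> *; ring.
    by rewrite -mulr_sumr s1 mulr1.
  rewrite -!Wsum; apply: ler_sum => m _.
  case: (pselect (exists w, 0 < s w m)) => [[w hp]|hn].
    by have /forallP := proj1 (hbest m); rewrite (hA w m hp); apply.
  have z w : s w m = 0.
    have [s0 _] := hs w.
    apply/eqP; rewrite eq_le (s0 m) andbT leNgt; apply/negP => h.
    by apply: hn; exists w.
  by rewrite /W !big1 // => w _; rewrite z mulr0 mul0r.
have [Bq' Bp' Bpay'] := @babble v uR m0 _ hopt.
have : c <= partitional_cheap_talk_payoff M mu0 (uSv v) uR.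
  rewrite -{1}(heq _ _ hm1) -/astar -Bpay'; apply: sup_upper_bound.
    split; first by exists (payoff mu0 (uSv v) (pureM m0) (pureA (fun _ => astar)));
      exists (pureM m0), (pureA (fun _ => astar)); split.
    by exists 1 => x [s' [r' [[hs' [hr' _]] _ ->]]]; apply: payoff_le1.
  by exists (pureM m0), (pureA (fun _ => astar)); split.
move: hvr; rewrite /values_randomization -/c => h1 h2.
by have := lt_le_trans h1 h2; rewrite ltxx.
Qed.

End Game.
Section Meas.
Variables (R : realType) (A Omega : finType) (a0 : A).

Definition es : seq (A * A) := enum [set: A * A].

Lemma sum_ind_min (N L : nat) :
  \sum_(k < N) (k < L)%:R = (minn N L)%:R :> R.
Proof.
elim: N => [|N IH]; first by rewrite big_ord0 min0n.
rewrite big_ord_recr /= IH -natrD; congr (_ %:R).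
case: (ltnP N L) => h /=; lia.
Qed.

Section Boxes.
Variable n : nat.
Hypothesis n0 : (0 < n)%N.

Definition pr (k : nat) : A * A := nth (a0, a0) es (k %/ n).
Definition good (k : nat) : bool := (k < size es * n)%N && ((pr k).1 != (pr k).2).
Definition onD (k : nat) (i : env_index A Omega) : bool :=
  (i == ((pr k).1, None)) || (i == ((pr k).2, None)).
Definition lo (k : nat) (i : env_index A Omega) : R :=
  if good k then (if onD k i then (k %% n)%:R / n%:R else 0) else 0.
Definition hi (k : nat) (i : env_index A Omega) : R :=
  if good k then (if onD k i then (k %% n).+1%:R / n%:R else 1) else 0.

Lemma lo_hi k i : lo k i <= hi k i.
Proof.
rewrite /lo /hi; case: (good k) => //; case: (onD k i) => //.
by apply: ler_wpM2r; rewrite ?invr_ge0 ?ler0n // ler_nat.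
Qed.

Lemma vol_le k : box_volume (lo k) (hi k) <= (k < size es * n)%:R * (n%:R ^-1 * n%:R ^-1).
Proof.
have npos : 0 < n%:R :> R by rewrite ltr0n.
rewrite /box_volume /lo /hi; case hg: (good k); last first.
  rewrite (bigD1 (a0, None)) //= subrr mul0r.
  by apply: mulr_ge0; rewrite ?ler0n // mulr_ge0 // invr_ge0 ler0n.
move: hg; rewrite /good => /andP[hk hne]; rewrite hk mul1r.
set a := (pr k).1; set b := (pr k).2.
have hba : (b, None) != (a, None) :> env_index A Omega.
  by apply/negP => /eqP [] /eqP; rewrite eq_sym (negbTE hne).
rewrite (bigD1 (a, None)) //= (bigD1 (b, None)) /=; last by rewrite hba.
rewrite big1; last first.
  move=> i /andP[hia hib]; rewrite /onD -/a -/b (negbTE hia) (negbTE hib) /= subr0 //.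
rewrite /onD -/a -/b !eqxx /= orbT mulr1.
have -> : (k %% n).+1%:R / n%:R - (k %% n)%:R / n%:R = n%:R^-1 :> R.
  by rewrite -mulrBl -natrB // subSnn mul1r.
by [].
Qed.

End Boxes.
Lemma null_diag :
  lebesgue_null (@unit_cube R (env_index A Omega) `\`
     [set x | unit_cube x /\ injective (fun a => x (a, None))]).
Proof.
move=> eps heps.
pose P := size es.
pose n := (Num.Def.archi_bound (P%:R / eps)).+1.
have n0 : (0 < n)%N by [].
have npos : 0 < n%:R :> R by rewrite ltr0n.
have hn : P%:R / eps < n%:R.
  apply: lt_le_trans (archi_boundP _) _; first by rewrite divr_ge0 // ltW.
  by rewrite ler_nat.
exists (lo n), (hi n); split; first exact: lo_hi.
split; last first.
  move=> N.
  apply: (le_trans (y := \sum_(k < N) ((k < P * n)%N)%:R * (n%:R^-1 * n%:R^-1))).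
    by apply: ler_sum => k _; apply: vol_le.
  rewrite -mulr_suml sum_ind_min.
  apply: (le_trans (y := (P * n)%:R * (n%:R^-1 * n%:R^-1))).
    apply: ler_wpM2r; first by rewrite mulr_ge0 // invr_ge0 ler0n.
    by rewrite ler_nat geq_minr.
  rewrite natrM mulrA -(mulrA P%:R) mulrV ?unitfE ?pnatr_eq0 -?lt0n // mulr1.
  rewrite ler_pdivrMr //; rewrite ltr_pdivrMr // in hn.
  by rewrite mulrC ltW.
move=> x [hx hnot].
have [a [b [hab hxab]]] : exists a b, a != b /\ x (a, None) = x (b, None).
  case: (pselect (exists a b, a != b /\ x (a, None) = x (b, None))) => // hn'.
  exfalso; apply: hnot; split => // a b hxab.
  case: (eqVneq a b) => // hne; by exfalso; apply: hn'; exists a, b.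
set y := x (a, None).
have hy : 0 <= y <= 1 := hx (a, None).
have hin : (a, b) \in es by rewrite /es mem_enum in_setT.
pose j := index (a, b) es.
have hj : (j < P)%N by rewrite /j index_mem.
pose t0 := Num.truncn (y * n%:R).
pose t1 := minn t0 n.-1.
have htt : (t1 < n)%N by rewrite /t1; lia.
exists (j * n + t1)%N.
move=> i.
have hdiv : ((j * n + t1) %/ n = j)%N by rewrite divnMDl // divn_small // addn0.
have hmod : ((j * n + t1) %% n = t1)%N by rewrite modnMDl modn_small.
have hpr : pr n (j * n + t1) = (a, b) by rewrite /pr hdiv /j nth_index.
have hgood : good n (j * n + t1).
  rewrite /good hpr /= hab andbT -/P.
  apply: (leq_trans (n := (j.+1 * n)%N)); first by rewrite mulSn addnC ltn_add2r.
  by rewrite leq_mul2r hj orbT.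
have hbounds : t1%:R / n%:R <= y <= t1.+1%:R / n%:R.
  have ht0 : t0%:R <= y * n%:R < t0.+1%:R.
    by apply: truncn_itv; rewrite mulr_ge0 // ?ler0n //; case/andP: hy.
  rewrite ler_pdivrMr // ler_pdivlMr //.
  apply/andP; split.
    apply: (le_trans (y := t0%:R)); first by rewrite ler_nat geq_minl.
    by case/andP: ht0.
  case: (leqP t0 n.-1) => h.
    have -> : t1 = t0 by rewrite /t1; apply/minn_idPl.
    by case/andP: ht0 => _ /ltW.
  have -> : t1 = n.-1 by rewrite /t1; apply/minn_idPr; apply: ltnW.
  rewrite prednK // -{2}(mul1r n%:R) ler_wpM2r ?ler0n //.
  by case/andP: hy.
rewrite /lo /hi hgood /onD hpr hmod /=.
case: ifP => hi'; last exact: hx i.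
have -> : x i = y by move/orP: hi' => [/eqP ->|/eqP ->].
exact: hbounds.
Qed.

End Meas.

Theorem theorem5 (R : realType) (A Omega M : finType)
  (mu0 : Omega -> R)
  (hA : (0 < #|A|)%N) (hOmega : (0 < #|Omega|)%N)
  (hmu0 : full_support_prior mu0)
  (hM : (maxn #|Omega| #|A| < #|M|)%N) :
  exists E : set (env_index A Omega -> R),
    full_measure_in_cube E /\
    forall x, E x ->
      values_randomization M mu0 (env_uS x) (env_uR x) ->
      commitment_valuable M mu0 (env_uS x) (env_uR x).
Proof.
case/card_gt0P: hA => a0 _.
case/card_gt0P: hOmega => w0 _.
have hM0 : (0 < #|M|)%N by apply: leq_ltn_trans hM.
case/card_gt0P: hM0 => m0 _.
exists [set x | unit_cube x /\ injective (fun a => x (a, None))].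
split; first split.
- by move=> x [].
- exact: (@null_diag R A Omega a0).
move=> x [hx hinj] hvr.
have v1 : forall a, x (a, None) <= 1 by move=> a; case/andP: (hx (a, None)).
exact: (@main R A Omega M mu0 hmu0 (fun a => x (a, None)) (env_uR x) a0 m0 w0 hinj v1 hvr).
Qed.
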